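(* Let $W(x,y,z)\in F(x,y,z)$ be one of the words $yx^{-1}y$, $y^{-s}xy^{s}$, $yz^{-s}y^{-1}xz^{s}$, $yz^{-s}xy^{-1}z^{s}$, $z^{-s}y^{-1}xz^{s}y$, $z^{-s}xy^{-1}z^{s}y$, where $s\in\mathbb{Z}$. Then for every group $G$ and every element $c\in G$, the algebraic system $(G,*_{W,c})$ is a quandle.
   Context: A quandle is a set $Q$ with a binary operation $(x,y)\mapsto x*y$ satisfying: (q1) $x*x=x$ for all $x\in Q$; (q2) for every $x\in Q$ the map $y\mapsto y*x$ is a bijection of $Q$; (q3) $(x*y)*z=(x*z)*(y*z)$ for all $x,y,z\in Q$. For a word $W(x,y,z)$ in the free group $F(x,y,z)$, a group $G$ and a fixed element $c\in G$, the binary operation $*_{W,c}$ on $G$ is defined by $a*_{W,c}b=W(a,b,c)$ (substitute $a$ for $x$, $b$ for $y$, $c$ for $z$ and evaluate in $G$). *)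

(* Defs.v *)
From mathcomp Require Import all_boot all_algebra.
Set Implicit Arguments. Unset Strict Implicit. Unset Printing Implicit Defensive.

Record AGroup := {
  gcar :> Type;
  gmul : gcar -> gcar -> gcar;
  gone : gcar;
  ginv : gcar -> gcar;
  gmulA : forall a b c, gmul a (gmul b c) = gmul (gmul a b) c;
  gmul1g : forall a, gmul gone a = a;
  gmulVg : forall a, gmul (ginv a) a = gone
}.

Inductive word : Type :=
| Wx | Wy | Wz | Wone
| Wmul of word & word
| Winv of word.

Fixpoint wpown (w : word) (n : nat) : word :=
  match n with 0 => Wone | n'.+1 => Wmul w (wpown w n') end.

Definition wpow (w : word) (s : int) : word :=
  match s with
  | Posz n => wpown w n
  | Negz n => Winv (wpown w n.+1)
  end.

Fixpoint weval (G : AGroup) (a b c : G) (w : word) : G :=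
  match w with
  | Wx => a | Wy => b | Wz => c | Wone => gone G
  | Wmul u v => gmul (weval a b c u) (weval a b c v)
  | Winv u => ginv (weval a b c u)
  end.

Definition wop (W : word) (G : AGroup) (c : G) : G -> G -> G :=
  fun a b => weval a b c W.

Definition is_quandle (Q : Type) (op : Q -> Q -> Q) : Prop :=
  (forall x, op x x = x) /\
  (forall x, bijective (fun y => op y x)) /\
  (forall x y z, op (op x y) z = op (op x z) (op y z)).

Notation "u ** v" := (Wmul u v) (at level 40, left associativity).

Definition qW1 : word := Wy ** Winv Wx ** Wy.
Definition qW2 (s : int) : word := wpow Wy (- s)%R ** Wx ** wpow Wy s.
Definition qW3 (s : int) : word :=
  Wy ** wpow Wz (- s)%R ** Winv Wy ** Wx ** wpow Wz s.
Definition qW4 (s : int) : word :=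
  Wy ** wpow Wz (- s)%R ** Wx ** Winv Wy ** wpow Wz s.
Definition qW5 (s : int) : word :=
  wpow Wz (- s)%R ** Winv Wy ** Wx ** wpow Wz s ** Wy.
Definition qW6 (s : int) : word :=
  wpow Wz (- s)%R ** Wx ** Winv Wy ** wpow Wz s ** Wy.

(* Main.v *)
Require Import Defs.
From mathcomp Require Import all_boot all_algebra.

Section GL.
Variable G : AGroup.
Local Notation "a * b" := (gmul a b).
Local Notation "a ^-1" := (ginv a).
Local Notation "1" := (gone G).

Lemma gA' (a b c : G) : (a * b) * c = a * (b * c).
Proof. by rewrite gmulA. Qed.
Lemma gVK (a b : G) : a^-1 * (a * b) = b.
Proof. by rewrite gmulA gmulVg gmul1g. Qed.
Lemma gmulgV (a : G) : a * a^-1 = 1.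
Proof.
rewrite -[LHS]gmul1g -{1}(gmulVg (a^-1)) gA' (gVK a).
exact: gmulVg.
Qed.
Lemma gmulg1 (a : G) : a * 1 = a.
Proof. by rewrite -(gmulVg a) gmulA gmulgV gmul1g. Qed.
Lemma ginvK (a : G) : a^-1^-1 = a.
Proof. by rewrite -[LHS]gmulg1 -(gmulVg a) gmulA gmulVg gmul1g. Qed.
Lemma gKV (a b : G) : a * (a^-1 * b) = b.
Proof. by rewrite gmulA gmulgV gmul1g. Qed.
Lemma ginvM (a b : G) : (a * b)^-1 = b^-1 * a^-1.
Proof.
have h : (a * b) * (b^-1 * a^-1) = 1 by rewrite gA' gKV gmulgV.
by rewrite -[LHS]gmulg1 -h gVK.
Qed.
Lemma ginv1 : (1 : G)^-1 = 1.
Proof. by rewrite -[LHS]gmul1g gmulgV. Qed.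

Definition ipow (g : G) (s : int) := weval g g g (wpow Wx s).

Lemma weval_wpow (a b c : G) w s :
  weval a b c (wpow w s) = ipow (weval a b c w) s.
Proof.
have h : forall n, weval a b c (wpown w n) =
   weval (weval a b c w) (weval a b c w) (weval a b c w) (wpown Wx n).
  by elim => //= n ->.
by rewrite /ipow; case: s => n /=; rewrite h.
Qed.

Lemma ipowN g s : ipow g (- s)%R = (ipow g s)^-1.
Proof.
rewrite /ipow; case: s => [[|n]|n] /=.
- by rewrite ginv1.
- by [].
- by rewrite ginvK.
Qed.

Lemma npow_conj (k h : G) n :
  weval (k^-1 * h * k) (k^-1 * h * k) (k^-1 * h * k) (wpown Wx n)
  = k^-1 * weval h h h (wpown Wx n) * k.
Proof.
elim: n => /= [|n ->]; first by rewrite gmulg1 gmulVg.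
by rewrite !gA' gKV.
Qed.

Lemma ipow_conj (k h : G) s : ipow (k^-1 * h * k) s = k^-1 * ipow h s * k.
Proof.
rewrite /ipow; case: s => n /=; first by rewrite npow_conj.
have := npow_conj k h n.+1; rewrite /= => ->.
by rewrite !ginvM ginvK !gA'.
Qed.
Lemma comm_inv (a b : G) : a * b = b * a -> a * b^-1 = b^-1 * a.
Proof.
move=> h.
by rewrite -[b^-1 * a]gmulg1 -(gmulgV b) gmulA -[(b^-1*a)*b]gmulA h gVK.
Qed.

Lemma ipow_comm (g : G) s : g * ipow g s = ipow g s * g.
Proof.
have h : forall n, g * weval g g g (wpown Wx n) = weval g g g (wpown Wx n) * g.
  elim => /= [|n IH]; first by rewrite gmulg1 gmul1g.
  by rewrite gA' IH.
rewrite /ipow; case: s => n; first exact: h.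
by have := comm_inv _ _ (h n.+1); rewrite /=.
Qed.
End GL.

Ltac gsimpl := repeat progress rewrite ?gA' ?ginvM ?ginvK ?gVK ?gKV ?gmulgV ?gmulVg ?gmulg1 ?gmul1g ?ginv1.

Ltac norm := repeat progress (rewrite ?weval_wpow /= ?ipowN); gsimpl.

Theorem mainTheorem2 (s : int) (W : word)
  (hW : W = qW1 \/ W = qW2 s \/ W = qW3 s \/ W = qW4 s \/ W = qW5 s \/ W = qW6 s)
  (G : AGroup) (c : G) :
  is_quandle (wop W c).
Proof.
rewrite /is_quandle /wop.
case: hW => [->|[->|[->|[->|[->|->]]]]];
  rewrite /qW1 /qW2 /qW3 /qW4 /qW5 /qW6.
- split; first by move=> x; norm.
  split.
    move=> x; exists (fun y => gmul x (gmul (ginv y) x)) => y /=; by norm.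
  by move=> x y z; norm.
- split; first by move=> x; norm; rewrite ipow_comm gVK.
  split.
    move=> x; exists (fun y => gmul (ipow _ x s) (gmul y (ginv (ipow _ x s)))) => y /=;
      by norm.
  move=> x y z; rewrite /= !weval_wpow /= !ipowN.
  rewrite ipow_conj; by gsimpl.
- split; first by move=> x; norm.
  split.
    move=> x; exists (fun y => gmul (gmul x (gmul (ipow _ c s) (ginv x))) (gmul y (ginv (ipow _ c s)))) => y /=;
      by norm.
  by move=> x y z; norm.
- split; first by move=> x; norm.
  split.
    move=> x; exists (fun y => gmul (ipow _ c s) (gmul (ginv x) (gmul y (gmul (ginv (ipow _ c s)) x)))) => y /=;
      by norm.
  by move=> x y z; norm.
- split; first by move=> x; norm.
  split.
    move=> x; exists (fun y => gmul (gmul x (ipow _ c s)) (gmul y (gmul (ginv x) (ginv (ipow _ c s))))) => y /=;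
      by norm.
  by move=> x y z; norm.
- split; first by move=> x; norm.
  split.
    move=> x; exists (fun y => gmul (ipow _ c s) (gmul y (gmul (ginv x) (gmul (ginv (ipow _ c s)) x)))) => y /=;
      by norm.
  by move=> x y z; norm.
Qed.
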